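(* Let $G$ be a connected bipartite graph with $q$ edges and bipartition $(V_1,V_2)$. If $\chi_{la}(G)=2$, then $|V_1|\neq |V_2|$ and $\binom{q+1}{2}$ is divisible by both $|V_1|$ and $|V_2|$.
   Context: For a connected graph $G=(V,E)$ with $q=|E|$, a local antimagic labeling is a bijection $f:E\to\{1,\dots,q\}$ such that for every pair of adjacent vertices $x,y$ we have $f^+(x)\ne f^+(y)$, where $f^+(x)=\sum f(e)$ over all edges $e$ incident to $x$. The color number $c(f)$ is the number of distinct values of $f^+$, and the local antimagic chromatic number $\chi_{la}(G)$ is the minimum of $c(f)$ over all local antimagic labelings $f$ of $G$. *)

(* Defs.v *)
From mathcomp Require Import all_boot all_order.
Set Implicit Arguments. Unset Strict Implicit. Unset Printing Implicit Defensive.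

Definition simple_graph (T : finType) (e : rel T) : Prop :=
  symmetric e /\ irreflexive e.

Definition connected_graph (T : finType) (e : rel T) : Prop :=
  forall x y : T, connect e x y.

Definition edges (T : finType) (e : rel T) : {set {set T}} :=
  [set [set x; y] | x in [set: T], y in [set: T] & e x y].

Definition is_bipartition (T : finType) (e : rel T) (V1 : {set T}) : Prop :=
  forall x y : T, e x y -> (x \in V1) != (y \in V1).

Definition edge_labeling (T : finType) (e : rel T) (f : {set T} -> nat) : Prop :=
  {in edges e &, injective f} /\
  (forall k : nat, (1 <= k <= #|edges e|) <-> exists2 a, a \in edges e & f a = k).

Definition fplus (T : finType) (e : rel T) (f : {set T} -> nat) (x : T) : nat :=
  \sum_(a in edges e | x \in a) f a.

Definition local_antimagic (T : finType) (e : rel T) (f : {set T} -> nat) : Prop :=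
  edge_labeling e f /\ forall x y : T, e x y -> fplus e f x != fplus e f y.

Definition color_number (T : finType) (e : rel T) (f : {set T} -> nat) : nat :=
  size (undup [seq fplus e f x | x <- enum T]).

Definition la_chromatic_eq (T : finType) (e : rel T) (k : nat) : Prop :=
  (exists f, local_antimagic e f /\ color_number e f = k) /\
  (forall f, local_antimagic e f -> k <= color_number e f).

(* Main.v *)
Require Import Defs.
From mathcomp Require Import all_boot all_order.
Set Implicit Arguments. Unset Strict Implicit. Unset Printing Implicit Defensive.

Lemma three (l : seq nat) u v w : size (undup l) = 2 -> u \in l -> v \in l -> w \in l ->
  u != v -> w != v -> u = w.
Proof.
move=> H ul vl wl uv wv; apply/eqP/negP => /negP uw.
have: 3 <= size (undup l).
  apply: (@uniq_leq_size _ [:: u; v; w]).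
    by rewrite /= !inE negb_or uv uw eq_sym wv.
  by move=> z; rewrite !inE mem_undup => /or3P [] /eqP ->.
by rewrite H.
Qed.

Lemma sum_labels (T : finType) (e : rel T) f : edge_labeling e f ->
  \sum_(a in edges e) f a = 'C(#|edges e|.+1, 2).
Proof.
case=> inj surj.
rewrite -big_enum /= -(big_map f xpredT id).
have P : perm_eq (map f (enum (edges e))) (iota 1 #|edges e|).
  apply: uniq_perm; last 1 first.
  - move=> k; rewrite mem_iota add1n ltnS.
    apply/mapP/idP.
      by case=> a; rewrite mem_enum => aE ->; apply/(surj (f a)); exists a.
    by move/(surj k) => [a aE <-]; exists a; rewrite ?mem_enum.
  - rewrite map_inj_in_uniq ?enum_uniq //.
    by move=> a b; rewrite !mem_enum; apply: inj.
  - exact: iota_uniq.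
rewrite (perm_big _ P) /=.
have -> : iota 1 #|edges e| = index_iota 1 #|edges e|.+1 by rewrite /index_iota subn1.
by rewrite -bin2_sum [in RHS]big_ltn.
Qed.

Lemma sum_side (T : finType) (e : rel T) f (V : {set T}) :
  simple_graph e -> is_bipartition e V ->
  \sum_(x in V) fplus e f x = \sum_(a in edges e) f a.
Proof.
move=> [sym irr] bip.
rewrite /fplus.
under eq_bigr do rewrite big_mkcondr /=.
rewrite exchange_big /=; apply: eq_bigr => a aE.
rewrite -big_mkcondr /= sum_nat_const.
suff -> : #|[pred x in V | x \in a]| = 1 by rewrite mul1n.
move: aE => /imset2P [x y _]; rewrite inE => /andP [_ exy] ->.
have xy : x != y by apply: contraTneq exy => ->; rewrite irr.
have := bip _ _ exy.
wlog xV : x y exy xy / x \in V.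
  move=> W H; have [xV|xV] := boolP (x \in V); first by apply: W.
  rewrite setUC; apply: (W y x) => //; first by rewrite sym.
    by rewrite eq_sym.
  by move: H; rewrite (negbTE xV); case: (y \in V).
  by move: H; rewrite (negbTE xV); case: (y \in V).
rewrite xV /= => yV.
rewrite -(card1 x); apply: eq_card => z; rewrite !inE.
case: (eqVneq z x) => [->|zx]; first by rewrite xV.
case: (eqVneq z y) => [->|zy]; last by rewrite andbF.
by move: yV; case: (y \in V).
Qed.


Theorem mainTheorem1 (T : finType) (e : rel T) (V1 : {set T}) :
  simple_graph e -> connected_graph e -> is_bipartition e V1 ->
  la_chromatic_eq e 2 ->
  #|V1| != #|~: V1| /\
  #|V1| %| 'C(#|edges e|.+1, 2) /\ #|~: V1| %| 'C(#|edges e|.+1, 2).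
Proof.
move=> sg conn bip [[f [[lab anti] cn]] _].
set s := fplus e f.
set l := [seq s x | x <- enum T].
have cn2 : size (undup l) = 2 := cn.
have inl z : s z \in l by apply: map_f; rewrite mem_enum.
have [x0 _] : exists x0 : T, true.
  case E: (enum T) => [|x0 r]; first by move: cn2; rewrite /l E.
  by exists x0.
have [y sy] : exists y, s y != s x0.
  case: (boolP [exists y, s y != s x0]) => [/existsP [y Hy]|/existsPn H].
    by exists y.
  have: size (undup l) <= 1.
    apply: (@uniq_leq_size _ _ [:: s x0]); first exact: undup_uniq.
    move=> k; rewrite mem_undup => /mapP [z _ ->]; rewrite inE.
    by have := H z; rewrite negbK.
  by rewrite cn2.
have other z : s z != s x0 -> s z = s y.
  by move=> h; apply: (three cn2 (inl z) (inl x0) (inl y)).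
have inv z : (s z == s x0) = ((z \in V1) == (x0 \in V1)).
  have /connectP [p0 pth0 ->] := conn x0 z.
  suff gen : forall p x, (s x == s x0) = ((x \in V1) == (x0 \in V1)) ->
      path e x p -> (s (last x p) == s x0) = ((last x p \in V1) == (x0 \in V1)).
    by apply: gen => //; rewrite !eqxx.
  elim=> [|w q IH] x Px //= /andP [exw pth]; apply: IH pth.
  have hb := bip _ _ exw; have ha := anti _ _ exw.
  case: (eqVneq (s x) (s x0)) Px => Hx Px.
    rewrite -Hx eq_sym (negbTE ha).
    by move: Px hb; case: (w \in V1); case: (x \in V1); case: (x0 \in V1).
  rewrite (three cn2 (inl w) (inl x) (inl x0) _ _) ?eqxx; try by rewrite eq_sym.
  by move: Px hb; case: (w \in V1); case: (x \in V1); case: (x0 \in V1).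
pose c1 := if x0 \in V1 then s x0 else s y.
pose c2 := if x0 \in V1 then s y else s x0.
have val1 z : z \in V1 -> s z = c1.
  move=> zV; case: (eqVneq (s z) (s x0)) (inv z) => h; rewrite zV /c1.
    by case: (x0 \in V1).
  by rewrite other //; case: (x0 \in V1).
have val2 z : z \in ~: V1 -> s z = c2.
  rewrite inE => /negbTE zV; case: (eqVneq (s z) (s x0)) (inv z) => h; rewrite zV /c2.
    by case: (x0 \in V1).
  by rewrite other //; case: (x0 \in V1).
have c12 : c1 != c2 by rewrite /c1 /c2; case: (x0 \in V1); rewrite // eq_sym.
have bip2 : is_bipartition e (~: V1).
  by move=> x z h; rewrite !inE; have := bip _ _ h; case: (x \in V1); case: (z \in V1).
have S1 := sum_side f sg bip; rewrite (sum_labels lab) in S1.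
have S2 := sum_side f sg bip2; rewrite (sum_labels lab) in S2.
rewrite (eq_bigr (fun _ => c1)) ?sum_nat_const in S1; last exact: val1.
rewrite (eq_bigr (fun _ => c2)) ?sum_nat_const in S2; last exact: val2.
have Cpos : 0 < 'C(#|edges e|.+1, 2).
  case Eq: #|edges e| => [|q]; last by rewrite bin_gt0.
  move/cards0_eq: Eq => E0.
  have z0 z : s z = 0 by rewrite /s /fplus big1 // => a; rewrite E0 inE.
  by move: sy; rewrite !z0.
split.
  apply/eqP => Heq.
  have : 0 < #|V1| * c1 by rewrite S1.
  rewrite muln_gt0 => /andP [Vpos _].
  have : #|V1| * c1 == #|V1| * c2.
    rewrite S1 Heq; apply/eqP; symmetry; exact: S2.
  by rewrite eqn_pmul2l // (negbTE c12).
by split; [rewrite -[X in _ %| X]S1 | rewrite -[X in _ %| X]S2]; apply: dvdn_mulr.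
Qed.
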